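(* For $1\mid t_j=1\mid\sum C_j$ with obligatory tests, the algorithm that first executes the tests of all $n$ jobs (in any order) and afterwards executes the processing parts of all jobs in non-decreasing order of $p_j$ is $2$-competitive.
   Context: Scheduling with obligatory tests and uniform test times: $n$ jobs on a single machine, each with test time $t_j=1$ and an unknown processing time $p_j\ge0$ revealed only when the test of $j$ completes. The test of a job must be executed before its processing part (which can be executed any time afterwards); operations are non-preemptive, one at a time. $C_j$ is the completion time of the processing part of $j$; objective $\sum_jC_j$. An algorithm is $\rho$-competitive if $\mathit{ALG}\le\rho\cdot\mathit{OPT}$ on every instance, where $\mathit{OPT}$ is the offline optimum (tests also obligatory). *)

(* Defs.v *)
From mathcomp Require Import all_boot all_order all_algebra all_fingroup.
Set Implicit Arguments. Unset Strict Implicit. Unset Printing Implicit Defensive.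
Import Order.TTheory GRing.Theory Num.Theory.
Local Open Scope ring_scope.

(* An operation of job j is (j, false) = its test (length 1) or
   (j, true) = its processing part (length p j). *)
Definition op (n : nat) := ('I_n * bool)%type.

Definition op_len (R : realFieldType) (n : nat) (p : 'I_n -> R) (o : op n) : R :=
  if o.2 then p o.1 else 1.

(* A (non-preemptive, single-machine) schedule assigns a start time to every
   operation. *)
Definition feasible (R : realFieldType) (n : nat) (p : 'I_n -> R)
    (s : op n -> R) : Prop :=
  [/\ forall o, 0 <= s o,
      forall o o', o != o' ->
        s o + op_len p o <= s o' \/ s o' + op_len p o' <= s o
    & forall j, s (j, false) + 1 <= s (j, true)].

Definition compl (R : realFieldType) (n : nat) (p : 'I_n -> R) (s : op n -> R)
    (j : 'I_n) : R := s (j, true) + p j.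

Definition sumC (R : realFieldType) (n : nat) (p : 'I_n -> R) (s : op n -> R) : R :=
  \sum_(j < n) compl p s j.

(* The algorithm's schedule: tests executed back to back from time 0 in the
   order tau (tau k = k-th tested job), then processing parts back to back
   from time n in the order sigma (sigma k = k-th processed job). *)
Definition alg_sched (R : realFieldType) (n : nat) (p : 'I_n -> R)
    (tau sigma : 'S_n) (o : op n) : R :=
  if o.2 then n%:R + \sum_(i < n | (i < (sigma^-1)%g o.1)%N) p (sigma i)
  else (((tau^-1)%g o.1 : nat)%:R).

Definition sorted_by_p (R : realFieldType) (n : nat) (p : 'I_n -> R)
    (sigma : 'S_n) : Prop :=
  forall i k : 'I_n, (i <= k)%N -> p (sigma i) <= p (sigma k).

(* Main.v *)
Require Import Defs.
From mathcomp Require Import all_boot all_order all_algebra all_fingroup.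
From mathcomp Require Import lra.
Import Order.TTheory GRing.Theory Num.Theory.
Local Open Scope ring_scope.

Lemma pack (R : realFieldType) (T : finType) (st len : T -> R) :
  (forall o, 0 <= len o) -> (forall o, 0 <= st o) ->
  (forall o o', o != o' -> st o + len o <= st o' \/ st o' + len o' <= st o) ->
  forall k (A : {set T}) E, #|A| = k -> 0 <= E ->
  (forall o, o \in A -> st o + len o <= E) -> \sum_(o in A) len o <= E.
Proof.
move=> len0 st0 dis; elim=> [|k IH] A E cA E0 HA.
  by move/eqP: cA; rewrite cards_eq0 => /eqP ->; rewrite big_set0.
have [o0 Ao0] : exists o0, o0 \in A.
  by apply/set0Pn; rewrite -card_gt0 cA.
case: (@arg_maxP _ R T o0 (mem A) st Ao0) => o Ao0m omax.
have Ao : o \in A := Ao0m.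
rewrite (big_setD1 o Ao) /=.
have cA' : #|A :\ o| = k by move: cA; rewrite (cardsD1 o) Ao add1n => -[].
have HE : st o + len o <= E := HA o Ao.
have [lz|lp] := eqVneq (len o) 0.
  rewrite lz add0r; apply: IH => // x; rewrite in_setD1 => /andP[_ Ax].
  exact: HA.
have lpos : 0 < len o by rewrite lt_def lp len0.
have sto0 : 0 <= st o.
  exact: st0.
apply: le_trans HE; rewrite addrC lerD2r; apply: IH => // x.
rewrite in_setD1 => /andP[xo Ax].
have sx : st x <= st o := omax x Ax.
case: (dis x o xo) => // H.
exfalso; move: (le_trans H sx); rewrite -lerBrDl subrr.
by rewrite leNgt lpos.
Qed.

Theorem mainTheorem15 (R : realFieldType) (n : nat) (p : 'I_n -> R)
    (tau sigma : 'S_n) :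
  (forall j, 0 <= p j) ->
  sorted_by_p p sigma ->
  forall s : op n -> R, feasible p s ->
    sumC p (alg_sched p tau sigma) <= 2 * sumC p s.
Proof.
move=> p0 srt s [s0 dis prec].
set C := compl p s.
set r := (fun j : 'I_n => ((sigma^-1)%g j : nat)).
pose w i j : R := if C i <= C j then 1 + p i else 0.
pose D : R := \sum_(j < n) \sum_(i < n) (if (r i <= r j)%N then p i else 0).
have rinj : forall i j, (r i == r j) = (i == j).
  by move=> i j; rewrite /r (inj_eq val_inj) (inj_eq perm_inj).
have st1 : forall j, \sum_(i < n) w i j <= C j.
  move=> j.
  have := @pack R (op n) s (op_len p) _ s0 dis _ [set o | C o.1 <= C j] (C j) erefl.
  have Cj0 : 0 <= C j by rewrite /C /compl addr_ge0.
  move=> /(_ _ Cj0 _); rewrite big_mkcond /=.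
  have pairE : forall G : op n -> R, \sum_(o : op n) G o = \sum_(i < n) \sum_(b : bool) G (i, b).
    by move=> G; rewrite pair_bigA /=; apply: eq_bigr; case.
  rewrite pairE.
  move=> H.
  suff -> : \sum_(i<n) w i j = \sum_(i<n)\sum_(b : bool) (if (i,b) \in [set o : op n | C o.1 <= C j] then op_len p (i,b) else 0).
    apply: H.
    - by case=> i [] //=; rewrite /op_len /=.
    - case=> i b; rewrite inE /= => Hi; apply: le_trans Hi; case: b; rewrite /op_len //=.
      apply: le_trans (prec i) _; rewrite /C /compl lerDl //.
  apply: eq_bigr => i _; rewrite big_bool /= !inE /op_len /= /w; case: ifP => _ //.
    by rewrite addrC.
  by rewrite addr0.
have st2 : \sum_(j < n) \sum_(i < n) w i j <= sumC p s.
  by apply: ler_sum => j _; apply: st1.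
pose g i j : R := (if (r i <= r j)%N then p i else 0) + (if (r j <= r i)%N then p j else 0).
have st3 : forall i j, 1 + g i j <= w i j + w j i.
  move=> i j; rewrite /g /w.
  case: (eqVneq i j) => [->|ij].
    rewrite leqnn le_refl; have := p0 j; lra.
  have rij : r i != r j by rewrite rinj.
  have := p0 i; have := p0 j.
  case: (ltngtP (r i) (r j)) => H.
  -
    have : p i <= p j.
      have := srt ((sigma^-1)%g i) ((sigma^-1)%g j) (ltnW H); by rewrite !permKV.
    case: (leP (C i) (C j)); case: (leP (C j) (C i)); lra.
  -
    have : p j <= p i.
      have := srt ((sigma^-1)%g j) ((sigma^-1)%g i) (ltnW H); by rewrite !permKV.
    case: (leP (C i) (C j)); case: (leP (C j) (C i)); lra.
  - by move: rij; rewrite H eqxx.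
have st4 : sumC p (alg_sched p tau sigma) = \sum_(j < n) (n%:R + \sum_(i < n) (if (r i <= r j)%N then p i else 0)).
  apply: eq_bigr => j _; rewrite /compl /alg_sched /= -addrA; congr (_ + _).
  rewrite (reindex_inj (@perm_inj _ (sigma^-1)%g)) /=.
  rewrite (eq_bigr (fun i => p i)); last by move=> i _; rewrite permKV.
  rewrite -big_mkcond /= [RHS](bigD1 j) ?leqnn //= addrC; congr (_ + _).
  apply: eq_bigl => i; rewrite ltn_neqAle -/(r i) -/(r j) rinj andbC //.
have st5 : \sum_(j < n) \sum_(i < n) g i j = D + D.
  pose a i j : R := if (r i <= r j)%N then p i else 0.
  rewrite (eq_bigr (fun j => \sum_(i < n) a i j + \sum_(i < n) a j i)); last first.
    by move=> j _; rewrite -big_split.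
  rewrite big_split /= [X in _ + X = _]exchange_big //.
have Dge0 : 0 <= D.
  apply: sumr_ge0 => j _; apply: sumr_ge0 => i _; case: ifP => _ //.
have st6 : \sum_(j < n) \sum_(i < n) (w i j + w j i) = 2 * \sum_(j < n) \sum_(i < n) w i j.
  rewrite (eq_bigr (fun j => \sum_(i < n) w i j + \sum_(i < n) w j i)); last first.
    by move=> j _; rewrite -big_split.
  rewrite big_split /= [X in _ + X = _]exchange_big /=; lra.
have st7 : \sum_(j < n) \sum_(i < n) (1 + g i j) <= \sum_(j < n) \sum_(i < n) (w i j + w j i).
  by apply: ler_sum => j _; apply: ler_sum => i _; apply: st3.
have st8 : \sum_(j < n) \sum_(i < n) (1 + g i j) = n%:R * n%:R + (D + D).
  rewrite -st5 (eq_bigr (fun j => n%:R + \sum_(i < n) g i j)); last first.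
    by move=> j _; rewrite big_split /= sumr_const card_ord.
  by rewrite big_split /= sumr_const card_ord mulr_natr.
have E : sumC p (alg_sched p tau sigma) = n%:R * n%:R + D.
  by rewrite st4 big_split /= sumr_const card_ord mulr_natr.
rewrite E; lra.
Qed.
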